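(* Let $n\ge2$ and let $\mathcal{S}=\{\mathbf{s}\in\mathbb{R}^n:\tfrac12\mathbf{s}^TA\mathbf{s}+\mathbf{b}^T\mathbf{s}+c=0\}$, where $A$ is a nonzero real symmetric $n\times n$ matrix, $\mathbf{b}\in\mathbb{R}^n$, $c\in\mathbb{R}$. Suppose $\mathcal{S}$ does not contain a line but contains at least two points. Then $\operatorname{rk}(A\,|\,\mathbf{b})=n$, and $\mathcal{S}$ is a rationally parameterisable hypersurface up to an exceptional set of hypersurface measure zero, i.e. there are a map $\boldsymbol{\sigma}:\mathbb{R}^{n-1}\to\mathbb{R}^n$ with rational components and a set $D\subseteq\mathbb{R}^{n-1}$ on which they are defined such that $\{\boldsymbol{\sigma}(\mathbf{t}):\mathbf{t}\in D\}\subseteq\mathcal{S}$ and its complement in $\mathcal{S}$ has hypersurface measure zero.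
   Context: $(A\,|\,\mathbf{b})$ is the $n\times(n+1)$ matrix obtained by appending the column $\mathbf{b}$ to $A$. *)

(* Defs.v *)
From HB Require Import structures.
From mathcomp Require Import all_boot all_order all_algebra.
From mathcomp Require Import all_classical all_reals all_analysis.
From mathcomp Require mpoly.
Set Implicit Arguments. Unset Strict Implicit. Unset Printing Implicit Defensive.
Import Order.TTheory GRing.Theory Num.Theory.
Local Open Scope classical_set_scope.
Local Open Scope ring_scope.

Definition quad_form (R : realType) (n : nat) (A : 'M[R]_n) (b : 'cV[R]_n) (c : R)
  (s : 'cV[R]_n) : R :=
  2^-1 * (s^T *m A *m s) ord0 ord0 + (b^T *m s) ord0 ord0 + c.

Definition quadric (R : realType) (n : nat) (A : 'M[R]_n) (b : 'cV[R]_n) (c : R)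
  : set 'cV[R]_n := [set s | quad_form A b c s = 0].

Definition contains_line (R : realType) (n : nat) (S : set 'cV[R]_n) : Prop :=
  exists (p d : 'cV[R]_n), d != 0 /\ forall t : R, S (p + t *: d).

Definition edist (R : realType) (n : nat) (x y : 'cV[R]_n) : R :=
  Num.sqrt (\sum_(i < n) (x i ord0 - y i ord0) ^+ 2).

(* E has s-dimensional Hausdorff measure zero (w.r.t. the Euclidean metric):
   H^s(E) = sup_delta H^s_delta(E) = 0, i.e. for every delta > 0 and eps > 0 there
   is a countable cover (U_k) of E with diam U_k <= r_k <= delta and
   sum_k r_k^s < eps.  ("diam U <= r" is written out as: all pairwise
   distances in U are <= r.) *)
Definition hausdorff_null (R : realType) (n s : nat) (E : set 'cV[R]_n) : Prop :=
  forall delta eps : R, 0 < delta -> 0 < eps ->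
  exists (U : nat -> set 'cV[R]_n) (r : nat -> R),
    (forall k, 0 <= r k <= delta) /\
    (forall k x y, U k x -> U k y -> edist x y <= r k) /\
    E `<=` \bigcup_k U k /\
    (\sum_(k <oo) ((r k ^+ s)%:E) < eps%:E)%E.

Definition mpeval (R : realType) (m : nat) (p : mpoly.mpoly m R) (t : 'cV[R]_m) : R :=
  mpoly.meval (fun i => t i ord0) p.

Definition rat_map (R : realType) (m n : nat) (p q : 'I_n -> mpoly.mpoly m R)
  (t : 'cV[R]_m) : 'cV[R]_n :=
  \col_(i < n) (mpeval (p i) t / mpeval (q i) t).

(* Main.v *)
Require Import Defs.
From HB Require Import structures.
From mathcomp Require Import all_boot all_order all_algebra.
From mathcomp Require Import all_classical all_reals all_analysis.
From mathcomp Require mpoly.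
From mathcomp Require Import ring lra.
Import Order.TTheory GRing.Theory Num.Theory.
Local Open Scope classical_set_scope.
Local Open Scope ring_scope.
Canonical mpoly.mpoly_meval__canonical__Algebra_Additive.
Canonical mpoly.mpoly_meval__canonical__GRing_LRMorphism.
Canonical mpoly.mpoly_meval__canonical__GRing_Linear.
Canonical mpoly.mpoly_meval__canonical__GRing_RMorphism.
Canonical mpoly.mpoly_mpoly__canonical__Algebra_AddMagma.
Canonical mpoly.mpoly_mpoly__canonical__Algebra_AddSemigroup.
Canonical mpoly.mpoly_mpoly__canonical__Algebra_AddUMagma.
Canonical mpoly.mpoly_mpoly__canonical__Algebra_BaseAddMagma.
Canonical mpoly.mpoly_mpoly__canonical__Algebra_BaseAddUMagma.
Canonical mpoly.mpoly_mpoly__canonical__Algebra_BaseZmodule.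
Canonical mpoly.mpoly_mpoly__canonical__Algebra_ChoiceBaseAddMagma.
Canonical mpoly.mpoly_mpoly__canonical__Algebra_ChoiceBaseAddUMagma.
Canonical mpoly.mpoly_mpoly__canonical__Algebra_Nmodule.
Canonical mpoly.mpoly_mpoly__canonical__Algebra_Zmodule.
Canonical mpoly.mpoly_mpoly__canonical__GRing_Algebra.
Canonical mpoly.mpoly_mpoly__canonical__GRing_ComAlgebra.
Canonical mpoly.mpoly_mpoly__canonical__GRing_ComNzRing.
Canonical mpoly.mpoly_mpoly__canonical__GRing_ComNzSemiRing.
Canonical mpoly.mpoly_mpoly__canonical__GRing_ComPzRing.
Canonical mpoly.mpoly_mpoly__canonical__GRing_ComPzSemiRing.
Canonical mpoly.mpoly_mpoly__canonical__GRing_ComSemiAlgebra.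
Canonical mpoly.mpoly_mpoly__canonical__GRing_ComUnitAlgebra.
Canonical mpoly.mpoly_mpoly__canonical__GRing_ComUnitRing.
Canonical mpoly.mpoly_mpoly__canonical__GRing_IntegralDomain.
Canonical mpoly.mpoly_mpoly__canonical__GRing_LSemiAlgebra.
Canonical mpoly.mpoly_mpoly__canonical__GRing_LSemiModule.
Canonical mpoly.mpoly_mpoly__canonical__GRing_Lalgebra.
Canonical mpoly.mpoly_mpoly__canonical__GRing_Lmodule.
Canonical mpoly.mpoly_mpoly__canonical__GRing_NzRing.
Canonical mpoly.mpoly_mpoly__canonical__GRing_NzSemiRing.
Canonical mpoly.mpoly_mpoly__canonical__GRing_PzRing.
Canonical mpoly.mpoly_mpoly__canonical__GRing_PzSemiRing.
Canonical mpoly.mpoly_mpoly__canonical__GRing_SemiAlgebra.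
Canonical mpoly.mpoly_mpoly__canonical__GRing_UnitAlgebra.
Canonical mpoly.mpoly_mpoly__canonical__GRing_UnitRing.
Canonical mpoly.mpoly_mpoly__canonical__choice_Choice.
Canonical mpoly.mpoly_mpoly__canonical__choice_SubChoice.
Canonical mpoly.mpoly_mpoly__canonical__eqtype_Equality.
Canonical mpoly.mpoly_mpoly__canonical__eqtype_SubEquality.
Canonical mpoly.mpoly_mpoly__canonical__eqtype_SubType.

Lemma e11D (R : realType) (M N : 'M[R]_1) : (M + N) ord0 ord0 = M ord0 ord0 + N ord0 ord0.
Proof. by rewrite mxE. Qed.
Lemma e11Z (R : realType) (a : R) (M : 'M[R]_1) : (a *: M) ord0 ord0 = a * M ord0 ord0.
Proof. by rewrite mxE. Qed.
Lemma e11T (R : realType) (M : 'M[R]_1) : M^T ord0 ord0 = M ord0 ord0.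
Proof. by rewrite mxE. Qed.

Lemma bil_sym (R : realType) (n : nat) (A : 'M[R]_n) (AT : A^T = A) (x y : 'cV[R]_n) :
  (x^T *m A *m y) ord0 ord0 = (y^T *m A *m x) ord0 ord0.
Proof.
by rewrite -e11T !trmx_mul trmxK AT mulmxA.
Qed.

Lemma quad_line (R : realType) (n : nat) (A : 'M[R]_n) (b : 'cV[R]_n) (c : R)
  (AT : A^T = A) (s d : 'cV[R]_n) (l : R) :
  quad_form A b c (s + l *: d) = quad_form A b c s + l * (d^T *m (A *m s + b)) ord0 ord0
     + 2^-1 * l^+2 * (d^T *m A *m d) ord0 ord0.
Proof.
rewrite /quad_form [(s + l *: d)^T]linearD /= [(l *: d)^T]linearZ /=.
rewrite !mulmxDl !mulmxDr -!scalemxAl -!scalemxAr.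
rewrite !e11D !e11Z (@bil_sym _ _ _ AT s d) !mulmxA.
have -> : (b^T *m d) ord0 ord0 = (d^T *m b) ord0 ord0 by rewrite -e11T trmx_mul trmxK.
move: ((s^T *m A *m s) ord0 ord0) ((d^T *m A *m s) ord0 ord0) ((d^T *m A *m d) ord0 ord0) ((d^T *m b) ord0 ord0) ((b^T *m s) ord0 ord0) => p q r u w.
by field.
Qed.

Lemma rank_part (R : realType) (n : nat) (A : 'M[R]_n) (b : 'cV[R]_n) (c : R) :
  A^T = A -> ~ contains_line (quadric A b c) ->
  (exists x, quadric A b c x) -> \rank (row_mx A b) = n.
Proof.
move=> AT noline [x Sx].
apply/eqP; rewrite eqn_leq rank_leq_row /= leqNgt; apply/negP => lt.
have : kermx (row_mx A b) != 0.
  by rewrite -mxrank_eq0 mxrank_ker subn_eq0 -ltnNge.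
case/rowV0Pn => v vker v0.
rewrite sub_kermx mul_mx_row -row_mx0 in vker.
have [vA vb] := eq_row_mx (eqP vker).
apply: noline; exists x, v^T; split.
  by apply: contra v0 => /eqP; rewrite -trmx0 => /trmx_inj ->.
move=> t; rewrite /quadric /= quad_line // trmxK mulmxDr mulmxA vA vb mul0mx addr0.
by rewrite mul0mx !mxE mulr0 mulr0 !addr0; exact: Sx.
Qed.

Definition vfun (R : realType) (k : nat) (t : 'cV[R]_k) : 'cV[R]_k.+1 :=
  \col_i match unlift ord_max i with
         | Some j => 2 * t j ord0 | None => \sum_j t j ord0 ^+ 2 - 1 end.

Arguments vfun {R k} t.

Lemma dir_surj (R : realType) (k : nat) (d : 'cV[R]_k.+1) :
  d != 0 -> exists t mu, mu != 0 /\ vfun t = mu *: d.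
Proof.
move=> d0.
wlog dl : d d0 / d ord_max ord0 <= 0.
  move=> H; case: (lerP (d ord_max ord0) 0) => h; first exact: H.
  have [||t [mu [mu0 E]]] := H (- d); first by rewrite oppr_eq0.
    by rewrite mxE oppr_le0 ltW.
  exists t, (- mu); split; first by rewrite oppr_eq0.
  by rewrite E scalerN scaleNr.
pose S := \sum_i d i ord0 ^+ 2.
have S0 : 0 < S.
  rewrite lt_def sumr_ge0 ?andbT; last by move=> i _; exact: sqr_ge0.
  apply: contra d0 => /eqP H; apply/eqP/matrixP => i j; rewrite (ord1 j) mxE.
  have := @psumr_eq0P _ _ xpredT (fun i => d i ord0 ^+ 2) (fun i _ => sqr_ge0 _) H i isT.
  by move/eqP; rewrite sqrf_eq0 => /eqP.
pose r := Num.sqrt S.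
have r0 : 0 < r by rewrite sqrtr_gt0.
have rS : r^+2 = S by rewrite sqr_sqrtr // ltW.
have a0 : 0 < r - d ord_max ord0 by lra.
have an0 : r - d ord_max ord0 != 0 by rewrite gt_eqF.
exists (\col_j (d (lift ord_max j) ord0 / (r - d ord_max ord0))), (2 / (r - d ord_max ord0)); split.
  by rewrite mulf_neq0 // ?invr_eq0 // pnatr_eq0.
apply/matrixP => i j; rewrite (ord1 j) !mxE.
case: unliftP => [l ->|->]; first by rewrite mxE; field.
have SE : S = \sum_j d (lift ord_max j) ord0 ^+ 2 + d ord_max ord0 ^+ 2.
  rewrite /S big_ord_recr /=; congr (_ + _); apply: eq_bigr => l _; congr (d _ _ ^+ 2); apply: val_inj => /=; by rewrite /bump leqNgt ltn_ord.
under eq_bigr => l _ do rewrite mxE expr_div_n.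
rewrite -mulr_suml.
have -> : \sum_j d (lift ord_max j) ord0 ^+ 2 = r^+2 - d ord_max ord0 ^+ 2 by rewrite rS SE; ring.
by field.
Qed.

Definition Xp (R : realType) (k : nat) (j : 'I_k) : mpoly.mpoly k R :=
  mpoly.mpolyX R (mpoly.mnm1 j).
Arguments Xp R {k} j.
Definition Cp (R : realType) (k : nat) (a : R) : mpoly.mpoly k R := mpoly.mpolyC k a.
Arguments Cp {R} k a.
Definition vpoly (R : realType) (k : nat) (i : 'I_k.+1) : mpoly.mpoly k R :=
  match unlift ord_max i with
  | Some j => Cp k 2 * Xp R j | None => \sum_j Xp R j * Xp R j - Cp k 1 end.
Arguments vpoly R {k} i.

Section Ev.
Lemma evD (R : realType) (k : nat) (t : 'cV[R]_k) p q :
  mpeval (p + q) t = mpeval p t + mpeval q t.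
Proof. exact: mpoly.mevalD. Qed.
Lemma evB (R : realType) (k : nat) (t : 'cV[R]_k) p q :
  mpeval (p - q) t = mpeval p t - mpeval q t.
Proof. exact: mpoly.mevalB. Qed.
Lemma evM (R : realType) (k : nat) (t : 'cV[R]_k) p q :
  mpeval (p * q) t = mpeval p t * mpeval q t.
Proof. exact: mpoly.mevalM. Qed.
Lemma evC (R : realType) (k : nat) (t : 'cV[R]_k) a : mpeval (Cp k a) t = a.
Proof. by rewrite /mpeval /Cp mpoly.mevalC. Qed.
Lemma evX (R : realType) (k : nat) (t : 'cV[R]_k) j : mpeval (Xp R j) t = t j ord0.
Proof. by rewrite /mpeval /Xp mpoly.mevalXU. Qed.
Lemma evS (R : realType) (k : nat) (t : 'cV[R]_k) (I : Type) (r : seq I) (F : I -> mpoly.mpoly k R) :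
  mpeval (\sum_(i <- r) F i) t = \sum_(i <- r) mpeval (F i) t.
Proof.
apply: (big_morph (fun p => mpeval p t)); first exact: evD.
exact: mpoly.meval0.
Qed.
End Ev.

Lemma vpolyE (R : realType) (k : nat) (t : 'cV[R]_k) i :
  mpeval (vpoly R i) t = vfun t i ord0.
Proof.
rewrite /vpoly mxE; case: unlift => [j|]; first by rewrite evM evC evX.
rewrite evB evC evS; congr (_ - _); apply: eq_bigr => j _.
by rewrite evM evX expr2.
Qed.

Lemma bilE (R : realType) (n : nat) (A : 'M[R]_n) (v : 'cV[R]_n) :
  (v^T *m A *m v) ord0 ord0 = \sum_j (\sum_i v i ord0 * A i j) * v j ord0.
Proof.
rewrite mxE; apply: eq_bigr => j _; rewrite mxE; congr (_ * _).
by apply: eq_bigr => i _; rewrite mxE.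
Qed.

Lemma linE (R : realType) (n : nat) (v w : 'cV[R]_n) :
  (v^T *m w) ord0 ord0 = \sum_i v i ord0 * w i ord0.
Proof. by rewrite mxE; apply: eq_bigr => i _; rewrite mxE. Qed.

Lemma scal_bil (R : realType) (n : nat) (A : 'M[R]_n) (v : 'cV[R]_n) a :
  ((a *: v)^T *m A *m (a *: v)) ord0 ord0 = a ^+ 2 * (v^T *m A *m v) ord0 ord0.
Proof.
by rewrite [(a *: v)^T]linearZ /= -!scalemxAl !e11Z -scalemxAr e11Z mulrA expr2.
Qed.

Lemma scal_lin (R : realType) (n : nat) (v w : 'cV[R]_n) a :
  ((a *: v)^T *m w) ord0 ord0 = a * (v^T *m w) ord0 ord0.
Proof. by rewrite linearZ /= -scalemxAl e11Z. Qed.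

Lemma null_sub1 (R : realType) (n k : nat) (x : 'cV[R]_n) (E : set 'cV[R]_n) :
  (0 < k)%N -> E `<=` [set x] -> hausdorff_null k E.
Proof.
move=> k0 Ex delta eps d0 e0.
exists (fun _ => [set x]), (fun _ => 0); split; [|split; [|split]].
- by move=> _; rewrite lexx ltW.
- move=> _ u v -> ->; rewrite /Defs.edist big1 ?sqrtr0 // => i _.
  by rewrite subrr expr0n.
- by move=> s /Ex ->; exists 0%N.
- rewrite eseries0 ?lte_fin // => i _ _.
  by rewrite expr0n; case: k k0.
Qed.

Lemma alg1 (R : realType) (a u : R) : a != 0 -> 0 + (-2 * u / a) * u + 2^-1 * (-2 * u / a) ^+ 2 * a = 0.
Proof. by move=> a0; field. Qed.

Lemma addE (R : realType) (m n : nat) (M N : 'M[R]_(m, n)) i j : (M + N) i j = M i j + N i j.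
Proof. by rewrite mxE. Qed.
Lemma scalE (R : realType) (m n : nat) (a : R) (M : 'M[R]_(m, n)) i j : (a *: M) i j = a * M i j.
Proof. by rewrite mxE. Qed.

Lemma param_part (R : realType) (k : nat) (A : 'M[R]_k.+1) (b : 'cV[R]_k.+1) (c : R)
  (x : 'cV[R]_k.+1) :
  (0 < k)%N -> A^T = A -> ~ contains_line (quadric A b c) -> quadric A b c x ->
  exists (p q : 'I_k.+1 -> mpoly.mpoly k R) (D : set 'cV[R]_k),
    (forall t, D t -> forall i, mpeval (q i) t != 0) /\
    (forall t, D t -> quadric A b c (rat_map p q t)) /\
    hausdorff_null k (quadric A b c `\` (rat_map p q @` D)).
Proof.
move=> k0 AT noline Sx.
have Sx0 : quad_form A b c x = 0 by exact: Sx.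
pose w := A *m x + b.
pose QA : mpoly.mpoly k R := \sum_j (\sum_i vpoly R i * Cp k (A i j)) * vpoly R j.
pose QW : mpoly.mpoly k R := \sum_i vpoly R i * Cp k (w i ord0).
have eA t : mpeval QA t = ((vfun t)^T *m A *m vfun t) ord0 ord0.
  rewrite bilE evS; apply: eq_bigr => j _; rewrite evM evS vpolyE; congr (_ * _).
  by apply: eq_bigr => i _; rewrite evM vpolyE evC.
have eW t : mpeval QW t = ((vfun t)^T *m w) ord0 ord0.
  by rewrite linE evS; apply: eq_bigr => i _; rewrite evM vpolyE evC.
pose p := fun i => Cp k (x i ord0) * QA - Cp k 2 * QW * vpoly R i.
pose q := fun i : 'I_k.+1 => QA.
pose lam t := -2 * ((vfun t)^T *m w) ord0 ord0 / ((vfun t)^T *m A *m vfun t) ord0 ord0.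
have rm t : ((vfun t)^T *m A *m vfun t) ord0 ord0 != 0 -> rat_map p q t = x + lam t *: vfun t.
  move=> nz; apply/matrixP => i j; rewrite (ord1 j) /rat_map [LHS]mxE addE scalE.
  rewrite /p /q evB !evM !evC eA eW vpolyE /lam.
  by field.
exists p, q, [set t | ((vfun t)^T *m A *m vfun t) ord0 ord0 != 0].
split; first by move=> t /= nz i; rewrite /q eA.
split.
  move=> t /= nz; rewrite rm // /quadric /= quad_line // Sx0.
  exact: alg1.
apply: (@null_sub1 _ _ _ x _ k0) => s [Ss nimg].
case: (eqVneq s x) => // sx; exfalso; apply: nimg.
have Ss0 : quad_form A b c s = 0 by exact: Ss.
have d0 : s - x != 0 by rewrite subr_eq0.
have Ql := @quad_line _ _ A b c AT x (s - x).
have S1 := Ql 1; rewrite scale1r addrC subrK Ss0 Sx0 expr1n mulr1 mul1r add0r in S1.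
have dA0 : ((s - x)^T *m A *m (s - x)) ord0 ord0 != 0.
  apply/negP => /eqP dA0; apply: noline; exists x, (s - x); split => // l.
  rewrite /quadric /= Ql Sx0 dA0 mulr0 addr0 add0r.
  by move: S1; rewrite dA0 mulr0 addr0 => <-; rewrite mulr0.
have [t [mu [mu0 E]]] := @dir_surj _ _ _ d0.
have nz : ((vfun t)^T *m A *m vfun t) ord0 ord0 != 0.
  by rewrite E scal_bil mulf_neq0 // expf_neq0.
exists t => //; rewrite rm // /lam E scal_bil scal_lin scalerA.
have -> : -2 * (mu * ((s - x)^T *m w) ord0 ord0) / (mu ^+ 2 * ((s - x)^T *m A *m (s - x)) ord0 ord0) * mu = 1.
  move: S1; rewrite /w; move: (((s - x)^T *m (A *m x + b)) ord0 ord0) => u S1.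
  have -> : u = - (2^-1 * ((s - x)^T *m A *m (s - x)) ord0 ord0) by lra.
  by field; rewrite dA0 mu0.
by rewrite scale1r addrC subrK.
Qed.

Theorem lemma3 (R : realType) (n : nat) (A : 'M[R]_n) (b : 'cV[R]_n) (c : R) :
  (2 <= n)%N -> A^T = A -> A != 0 ->
  ~ contains_line (quadric A b c) ->
  (exists x y : 'cV[R]_n, x != y /\ quadric A b c x /\ quadric A b c y) ->
  \rank (row_mx A b) = n /\
  exists (p q : 'I_n -> mpoly.mpoly n.-1 R) (D : set 'cV[R]_(n.-1)),
    (forall t, D t -> forall i, mpeval (q i) t != 0) /\
    (forall t, D t -> quadric A b c (rat_map p q t)) /\
    hausdorff_null n.-1 (quadric A b c `\` (rat_map p q @` D)).
Proof.
move=> n2 AT A0 noline [x [y [xy [Sx Sy]]]].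
split; first exact: (@rank_part _ _ A b c AT noline (ex_intro _ x Sx)).
case: n n2 A b c AT A0 noline x y xy Sx Sy => [|[|m]] // _ A b c AT _ noline x _ _ Sx _.
exact: (@param_part R m.+1 A b c x isT AT noline Sx).
Qed.
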